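(* Let $R$ be a commutative unital ring and $E$ an $R$-module such that $\mathrm{Ass}_R(E)$ is compact in the flat topology of $\mathrm{Spec}(R)$. Suppose that $S$ is a multiplicatively closed subset of $R$ with $E_S=0$. Then there is some $a\in S$ such that $E_a=0$, i.e. $a\in\mathcal O_R(E)$.
   Context: $\mathrm{Ass}_R(E)$ (the weak assassinator) is the set of prime ideals $P$ of $R$ that are minimal among the prime ideals containing $0:_Rx$ for some $x\in E$. The flat topology on $\mathrm{Spec}(R)$ is the topology whose closed sets are the images of $\mathrm{Spec}(T)\to\mathrm{Spec}(R)$ for flat ring morphisms $R\to T$; the sets $\mathrm V(I)=\{P\mid I\subseteq P\}$ with $I$ a finitely generated ideal form a basis of its open sets. For $a\in R$, $E_a$ is the localization of $E$ at $\{a^n\mid n\in\mathbb N\}$, and $\mathcal O_R(E)=\{a\in R\mid E_a=0\}$. Compactness does not require Hausdorffness. *)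

(* Defs.v *)
From Stdlib Require Import List.
From HB Require Import structures.
From mathcomp Require Import all_boot all_order all_algebra.
Set Implicit Arguments. Unset Strict Implicit. Unset Printing Implicit Defensive.
Import GRing.Theory.
Local Open Scope ring_scope.

Section Defs.
Variable R : comPzRingType.

Definition subset_of {T : Type} (A B : T -> Prop) := forall x, A x -> B x.

Definition is_ideal (I : R -> Prop) :=
  [/\ I 0, (forall a b, I a -> I b -> I (a + b)) & (forall r a, I a -> I (r * a))].

Definition is_prime_ideal (P : R -> Prop) :=
  [/\ is_ideal P, ~ P 1 & (forall a b, P (a * b) -> P a \/ P b)].

Definition spec := {P : R -> Prop | is_prime_ideal P}.

Definition ideal_gen (s : seq R) : R -> Prop :=
  fun x => exists c : 'I_(size s) -> R, x = \sum_(i < size s) c i * s`_i.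

Definition V (I : R -> Prop) : spec -> Prop := fun P => subset_of I (sval P).

(* Flat topology: basic opens are V(I) with I finitely generated;
   open sets are unions of basic opens. *)
Definition flat_open (U : spec -> Prop) :=
  forall P, U P -> exists s : seq R, V (ideal_gen s) P /\ subset_of (V (ideal_gen s)) U.

Definition flat_compact (A : spec -> Prop) :=
  forall C : (spec -> Prop) -> Prop,
    (forall U, C U -> flat_open U) ->
    (forall P, A P -> exists U, C U /\ U P) ->
    exists s : seq (spec -> Prop),
      (forall U, List.In U s -> C U) /\
      (forall P, A P -> exists U, List.In U s /\ U P).

Variable E : lmodType R.

Definition ann (x : E) : R -> Prop := fun r => r *: x = 0.

(* weak assassinator Ass_R(E) *)
Definition Ass : spec -> Prop := fun P =>
  exists x : E, subset_of (ann x) (sval P) /\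
    forall Q : spec, subset_of (ann x) (sval Q) -> subset_of (sval Q) (sval P) ->
      subset_of (sval P) (sval Q).

Definition mult_closed (S : R -> Prop) :=
  S 1 /\ forall a b, S a -> S b -> S (a * b).

(* equality of fractions x/s = y/t in the localization E_S *)
Definition loc_eq (S : R -> Prop) (x : E) (s : R) (y : E) (t : R) :=
  exists u, S u /\ u *: (t *: x - s *: y) = 0.

Definition loc_zero (S : R -> Prop) :=
  forall (x : E) (s : R), S s -> loc_eq S x s 0 1.

Definition powers (a : R) : R -> Prop := fun r => exists n : nat, r = a ^+ n.

Definition O_R : R -> Prop := fun a => loc_zero (powers a).

End Defs.

(* Main.v *)
Require Import Defs.
From mathcomp Require Import all_boot all_order all_algebra.
From mathcomp Require boolp classical_sets.
From Stdlib Require Import Classical.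
Import GRing.Theory.
Local Open Scope ring_scope.

Lemma zornP (T : Type) (le : T -> T -> Prop) (x0 : T) :
  (forall t, le t t) -> (forall r s t, le r s -> le s t -> le r t) ->
  (forall A : T -> Prop, (exists t, A t) ->
     (forall s t, A s -> A t -> le s t \/ le t s) -> exists t, forall s, A s -> le s t) ->
  exists t, forall s, le t s -> le s t.
Proof.
move=> refl tr ch.
pose R := fun x y => boolp.asbool (le x y).
have [||| t Ht] := @classical_sets.ZL_preorder T x0 R.
- by move=> t; apply/boolp.asboolP.
- by move=> r s t /boolp.asboolP h1 /boolp.asboolP h2; apply/boolp.asboolP; apply: tr h1 h2.
- move=> A tot.
  case: (classic (exists t, A t)) => [ne|e].
  + have tot' : forall s t, A s -> A t -> le s t \/ le t s.
      move=> s t As At; case: (tot s t As At) => /boolp.asboolP; tauto.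
    have [t Ht] := ch A ne tot'.
    by exists t => s As; apply/boolp.asboolP; apply: Ht.
  + exists x0 => s As; exfalso; apply: e; by exists s.
- by exists t => s /boolp.asboolP /Ht /boolp.asboolP.
Qed.

Section Ring.
Variable R : comPzRingType.

Definition goodJ (I : R -> Prop) (a : R) (J : R -> Prop) :=
  [/\ is_ideal J, subset_of I J & forall n : nat, ~ J (a ^+ n)].

Lemma exists_max_ideal (I : R -> Prop) a : goodJ I a I ->
  exists J, goodJ I a J /\ forall N, goodJ I a N -> subset_of J N -> subset_of N J.
Proof.
move=> gI.
pose T := {J : R -> Prop | goodJ I a J}.
pose le := fun X Y : T => subset_of (sval X) (sval Y).
have [||| t Ht] := @zornP T le (exist _ I gI).
- by move=> t x.
- by move=> r s t h1 h2 x /h1 /h2.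
- move=> A [t0 At0] tot.
  pose U := fun r => exists X : T, A X /\ sval X r.
  have gU : goodJ I a U.
    case: (svalP t0) => [[i0 iD iM] sI na].
    split.
    + split.
      * by exists t0; split => //; case: (svalP t0) => -[].
      * move=> x y [X [AX Xx]] [Y [AY Yy]].
        case: (tot X Y AX AY) => le1.
        - exists Y; split => //; case: (svalP Y) => -[_ D _] _ _; apply: D => //; exact: le1.
        - exists X; split => //; case: (svalP X) => -[_ D _] _ _; apply: D => //; exact: le1.
      * move=> r x [X [AX Xx]]; exists X; split => //.
        by case: (svalP X) => -[_ _ M] _ _; apply: M.
    + by move=> x Ix; exists t0; split => //; case: (svalP t0) => _ /(_ x Ix).
    + by move=> n [X [AX Xx]]; case: (svalP X) => _ _ /(_ n).
  exists (exist _ U gU) => s As x sx; by exists s.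
- exists (sval t); split; first exact: (svalP t).
  move=> N gN tN; exact: (Ht (exist _ N gN) tN).
Qed.


Lemma max_prime (I : R -> Prop) a J : goodJ I a J ->
  (forall N, goodJ I a N -> subset_of J N -> subset_of N J) ->
  is_prime_ideal J.
Proof.
move=> [[J0 JD JM] IJ na] mx.
have ext : forall b, ~ J b -> exists n (j r : R), J j /\ a ^+ n = j + r * b.
  move=> b nb.
  pose Jb := fun y => exists j r, J j /\ y = j + r * b.
  apply: NNPP => hn.
  have gJb : goodJ I a Jb.
    split.
    - split.
      + by exists 0, 0; rewrite mul0r addr0.
      + move=> x y [j [r [Jj ->]]] [j' [r' [Jj' ->]]].
        exists (j + j'), (r + r'); split; first exact: JD.
        by rewrite mulrDl addrACA.
      + move=> r x [j [r' [Jj ->]]]; exists (r * j), (r * r'); split; first exact: (JM).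
        by rewrite mulrDr mulrA.
    - by move=> x Ix; exists x, 0; rewrite mul0r addr0; split => //; apply: IJ.
    - move=> n [j [r [Jj e]]]; apply: hn; by exists n, j, r.
  apply: nb; apply: (mx Jb gJb).
  - by move=> x Jx; exists x, 0; rewrite mul0r addr0.
  - by exists 0, 1; rewrite mul1r add0r; split.
split.
- by [].
- by move=> J1; apply: (na 0%N); rewrite expr0.
- move=> b c Jbc; apply: NNPP => h.
  have [nb nc] : ~ J b /\ ~ J c by tauto.
  have [n [j [r [Jj e1]]]] := ext b nb.
  have [m [j' [r' [Jj' e2]]]] := ext c nc.
  apply: (na (n + m)%N); rewrite exprD e1 e2.
  have -> : (j + r * b) * (j' + r' * c) =
    j * (j' + r' * c) + (r * b * j' + (r * r') * (b * c)).
    rewrite mulrDl [r * b * _]mulrDr; congr (_ + (_ + _)).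
    by rewrite -!mulrA; congr (_ * _); rewrite mulrCA.
  apply: (JD); first by rewrite [j * _]mulrC; apply: (JM).
  apply: (JD); first by apply: (JM).
  exact: (JM).
Qed.


Definition goodP (I : R -> Prop) (a : R) (P : R -> Prop) :=
  [/\ is_prime_ideal P, subset_of I P & ~ P a].

Lemma min_prime (I : R -> Prop) a : is_ideal I -> (forall n, ~ I (a ^+ n)) ->
  exists P, goodP I a P /\
    forall Q, is_prime_ideal Q -> subset_of I Q -> subset_of Q P -> subset_of P Q.
Proof.
move=> iI nI.
have [J [gJ mJ]] := @exists_max_ideal I a (And3 iI (fun x h => h) nI).
have pJ := @max_prime I a J gJ mJ.
have gP : goodP I a J.
  case: gJ => _ IJ na; split => //.
  by move=> Ja; apply: (na 1%N); rewrite expr1.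
pose T := {P : R -> Prop | goodP I a P}.
pose le := fun X Y : T => subset_of (sval Y) (sval X).
have [||| t Ht] := @zornP T le (exist _ J gP).
- by move=> t x.
- by move=> r s t h1 h2 x /h2 /h1.
- move=> A [t0 At0] tot.
  pose U := fun r => forall X : T, A X -> sval X r.
  have gU : goodP I a U.
    split.
    + split.
      * split.
        - by move=> X AX; case: (svalP X) => -[[]].
        - move=> x y hx hy X AX; case: (svalP X) => -[[_ D _] _ _] _ _.
          by apply: D; [apply: hx | apply: hy].
        - move=> r x hx X AX; case: (svalP X) => -[[_ _ M] _ _] _ _.
          by apply: M; apply: hx.
      * move=> h; case: (svalP t0) => -[_ n1 _] _ _; apply: n1; exact: h.
      * move=> x y hxy; apply: NNPP => h.
        have [[X [AX nX]] [Y [AY nY]]] :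
            (exists X : T, A X /\ ~ sval X x) /\ (exists Y : T, A Y /\ ~ sval Y y).
          split; apply: NNPP => h'; apply: h;
            [left | right] => Z AZ; apply: NNPP => hz; apply: h'; by exists Z.
        case: (svalP X) => -[_ _ pX] _ _.
        case: (svalP Y) => -[_ _ pY] _ _.
        case: (tot X Y AX AY) => le1.
        -
          case: (pY x y (hxy Y AY)) => [hx|hy]; [apply: nX; exact: le1 | exact: nY].
        - case: (pX x y (hxy X AX)) => [hx|hy]; [exact: nX | apply: nY; exact: le1].
    + by move=> x Ix X AX; case: (svalP X) => _ /(_ x Ix).
    + by move=> h; case: (svalP t0) => _ _; apply; apply: h.
  exists (exist _ U gU) => s As x /=; by apply.
- exists (sval t); split; first exact: (svalP t).
  move=> Q pQ IQ QP.
  have gQ : goodP I a Q.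
    split => // Qa; case: (svalP t) => _ _; apply; exact: QP.
  exact: (Ht (exist _ Q gQ) QP).
Qed.

End Ring.

Lemma V1P (R : comPzRingType) (u : R) (P : spec R) :
  V (ideal_gen [:: u]) P <-> sval P u.
Proof.
case: P => P pP; have [[P0 PD PM] _ _] := pP; rewrite /V /=; split.
- move=> h; apply: h; exists (fun _ => 1) => /=.
  by rewrite big_ord1 mul1r.
- move=> Pu y [c ->] /=; rewrite big_ord1 /=; exact: PM.
Qed.

Theorem proposition2p10 (R : comPzRingType) (E : lmodType R) (S : R -> Prop) :
  flat_compact (Ass E) ->
  mult_closed S ->
  loc_zero E S ->
  exists a, S a /\ O_R E a.
Proof.
move=> cpt [S1 SM] lz.
have hS0 : forall x : E, exists u, S u /\ u *: x = 0.
  move=> x; have [u [Su h]] := lz x 1 S1.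
  by exists u; split => //; rewrite scale1r scaler0 subr0 in h.
pose C := fun U : spec R -> Prop => exists u, S u /\ U = V (ideal_gen [:: u]).
have opC : forall U, C U -> flat_open U.
  move=> U [u [Su ->]] P VP; exists [:: u]; split => //.
have covC : forall P, Ass E P -> exists U, C U /\ U P.
  move=> P [x [annP _]].
  have [u [Su ux]] := hS0 x.
  exists (V (ideal_gen [:: u])); split; first by exists u.
  by apply/V1P; apply: annP.
have [s [sC cov]] := cpt C opC covC.
have [a [Sa Pa]] : exists a, S a /\
    forall P : spec R, (exists U, List.In U s /\ U P) -> sval P a.
  elim: s sC {cov} => [|U s IH] sC.
  - by exists 1; split => // P [U [[]]].
  - have [a [Sa Pa]] := IH (fun U' h => sC U' (or_intror h)).
    have [u [Su eU]] := sC U (or_introl erefl).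
    exists (u * a); split; first exact: SM.
    move=> P [U' [[<-|inU] UP]].
    + rewrite eU in UP; move/V1P: UP => Pu.
      case: (svalP P) => -[_ _ PM] _ _; rewrite mulrC; exact: PM.
    + case: (svalP P) => -[_ _ PM] _ _; apply: PM; apply: Pa; by exists U'.
exists a; split => //.
move=> x t _.
suff [n hn] : exists n : nat, a ^+ n *: x = 0.
  exists (a ^+ n); split; first by exists n.
  by rewrite scaler0 subr0 scale1r.
apply: NNPP => hn.
have iI : is_ideal (ann x).
  split.
  - by rewrite /ann scale0r.
  - by move=> b c hb hc; rewrite /ann scalerDl hb hc addr0.
  - by move=> r b hb; rewrite /ann -scalerA hb scaler0.
have nI : forall n, ~ ann x (a ^+ n) by move=> n h; apply: hn; exists n.
have [P [[pP IP Pa'] mP]] := @min_prime R (ann x) a iI nI.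
pose p : spec R := exist _ P pP.
apply: Pa'; apply: (Pa p).
have [U [inU Up]] : exists U, List.In U s /\ U p.
  apply: cov; exists x; split => // Q IQ QP.
  exact: (mP (sval Q) (svalP Q) IQ QP).
by exists U.
Qed.
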